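(* Let $G$ be a torsion-free group, $\mathbb{F}$ a field, $\alpha$ a zero divisor in $\mathbb{F}[G]$ with $|supp(\alpha)|=4$ and $|S_\alpha|=12$, and $\beta$ a non-zero element of $\mathbb{F}[G]$ with $\alpha\beta=0$. If the maximum degree of $Z(\alpha,\beta)$ is $5$, then the number of vertices of degree $5$ in $Z(\alpha,\beta)$ is a multiple of $6$.
   Context: $supp(\gamma)=\{x\in G:\gamma_x\ne0\}$; $S_\alpha=\{h^{-1}h':h\ne h',\ h,h'\in supp(\alpha)\}$. The zero-divisor graph $Z(\alpha,\beta)$ is the multigraph with vertex set $supp(\beta)$ whose edges are the sets $\{(h,h',g,g'),(h',h,g',g)\}$ with $h,h'\in supp(\alpha)$, $g,g'\in supp(\beta)$, $g\ne g'$, $hg=h'g'$, each joining $g$ and $g'$; the degree of a vertex is the number of incident edges. *)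

(* Defs.v *)
From HB Require Import structures.
From mathcomp Require Import all_boot all_order all_algebra.
From mathcomp Require Import finmap.
Set Implicit Arguments.
Unset Strict Implicit.
Unset Printing Implicit Defensive.
Import GRing.Theory.
Local Open Scope fset_scope.

(* Elements of the group algebra F[G] are finitely supported functions
   G -> F, i.e. {fsfun G -> F with 0}. G is an arbitrary (possibly infinite)
   group: a MathComp [groupType] (boot/monoid.v). *)

Section GroupAlgebra.
Variables (G : groupType) (F : fieldType).

Definition torsion_free : Prop :=
  forall (x : G) (n : nat), (0 < n)%N -> (x ^+ n)%g = 1%g -> x = 1%g.

Definition supp (a : {fsfun G -> F with 0%R}) : {fset G} := finsupp a.

(* coefficient of x in the product a * b in F[G]:
   (a b)_x = sum_{h g = x} a_h b_g = sum_{h in supp a} a_h b_{h^-1 x} *)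
Definition galg_mul_coef (a b : {fsfun G -> F with 0%R}) (x : G) : F :=
  (\sum_(h <- supp a) a h * b ((h^-1) * x)%g)%R.

Definition galg_mul_zero (a b : {fsfun G -> F with 0%R}) : Prop :=
  forall x : G, galg_mul_coef a b x = 0%R.

Definition zero_divisor (a : {fsfun G -> F with 0%R}) : Prop :=
  a != [fsfun] /\ exists c : {fsfun G -> F with 0%R}, c != [fsfun] /\ galg_mul_zero a c.

Definition S_set (a : {fsfun G -> F with 0%R}) : {fset G} :=
  [fset (h^-1 * h')%g | h in supp a, h' in supp a & h != h'].

(* quadruples (h, h', g, g') written (((h, h'), g), g') *)
Definition quad := (G * G * G * G)%type.

Definition quad_swap (q : quad) : quad :=
  (q.1.1.2, q.1.1.1, q.2, q.1.2).

Definition Z_quads (a b : {fsfun G -> F with 0%R}) : {fset quad} :=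
  [fset q in ((supp a `*` supp a) `*` supp b) `*` supp b
     | (q.1.2 != q.2) && ((q.1.1.1 * q.1.2)%g == (q.1.1.2 * q.2)%g)].

Definition Z_edges (a b : {fsfun G -> F with 0%R}) : {fset {fset quad}} :=
  [fset [fset q; quad_swap q] | q in Z_quads a b].

(* the edge {(h,h',g,g'),(h',h,g',g)} joins g and g' *)
Definition edge_ends (e : {fset quad}) : {fset G} := [fset q.1.2 | q in e].

Definition Z_deg (a b : {fsfun G -> F with 0%R}) (v : G) : nat :=
  #|` [fset e in Z_edges a b | v \in edge_ends e] |.

(* vertex set of Z(a,b) is supp b *)
Definition Z_maxdeg (a b : {fsfun G -> F with 0%R}) : nat :=
  \max_(v <- supp b) Z_deg a b v.

End GroupAlgebra.

(* Main.v *)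
Require Import Defs.
From HB Require Import structures.
From mathcomp Require Import all_boot all_order all_algebra.
From mathcomp Require Import finmap.
From mathcomp Require Import zify.
Set Implicit Arguments.
Unset Strict Implicit.
Local Open Scope fset_scope.

Definition tcnt (G : groupType) (A B : {fset G}) (x : G) : nat :=
  \sum_(h <- A) (((h^-1 * x)%g \in B) : nat).

Definition Xs (G : groupType) (A B : {fset G}) : seq G :=
  undup [seq (h * g)%g | h <- A, g <- B].

Lemma reindex (G : groupType) (A B : {fset G}) (f : G -> nat) :
  \sum_(h <- A) \sum_(g <- B) f (h * g)%g =
  \sum_(x <- Xs A B) tcnt A B x * f x.
Proof.
under [RHS]eq_bigr => x _ do rewrite /tcnt big_distrl /=.
rewrite [RHS]exchange_big /=. apply: eq_big_seq => h hA.
rewrite -(big_map (fun g => (h * g)%g) xpredT f).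
under [RHS]eq_bigr => x _ do rewrite mulnbl.
rewrite -big_mkcond /= -[RHS]big_filter; apply: perm_big.
apply: uniq_perm.
- by rewrite map_inj_uniq ?fset_uniq //; apply: mulgI.
- by rewrite filter_uniq // undup_uniq.
move=> x; rewrite mem_filter mem_undup; apply/mapP/andP.
- case=> g gB ->; rewrite mulKg gB; split=> //.
  by apply/allpairsP; exists (h, g).
- case=> xB _; exists (h^-1 * x)%g => //; by rewrite mulVKg.
Qed.

Lemma t_neq1 (G : groupType) (F : fieldType) (a b : {fsfun G -> F with 0%R}) x :
  galg_mul_zero a b -> tcnt (supp a) (supp b) x != 1.
Proof.
move=> z; apply/negP=> /eqP t1.
case: (boolP (has (fun h => (h^-1*x)%g \in supp b) (supp a))) => [/hasP [h0 h0A h0c] | hn].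
- rewrite /tcnt (bigD1_seq h0) ?fset_uniq //= h0c in t1.
  have /eqP r0 : \sum_(i <- supp a | i != h0) (((i^-1 * x)%g \in supp b) : nat) == 0 by move: t1; rewrite add1n => -[->].
  have := z x; rewrite /galg_mul_coef (bigD1_seq h0) ?fset_uniq //= big1_seq ?GRing.addr0.
  + apply/eqP; apply: GRing.mulf_neq0; first by move: h0A; rewrite /supp mem_finsupp.
    by move: h0c; rewrite /supp mem_finsupp.
  move=> h /andP [hh0 hA].
  move/eqP: r0; rewrite sum_nat_seq_eq0 => /allP /(_ h hA); rewrite hh0 /= eqb0 => hn.
  by rewrite (fsfun_dflt hn) GRing.mulr0.
- move: t1; rewrite /tcnt big1_seq // => h /andP [_ hA].
  by move/hasPn: hn => /(_ h hA) /negbTE ->.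
Qed.

Lemma card_fset_seq (T : choiceType) (S : {fset T}) (s : seq T) :
  uniq s -> S =i s -> #|` S| = size s.
Proof. by move=> us eq; apply/perm_size/uniq_perm => //; apply: fset_uniq. Qed.

Definition qv (G : groupType) (v : G) (p : G * G) : quad G :=
  (p.1, p.2, v, (p.2^-1 * (p.1 * v))%g).
Definition Ee (G : groupType) (v : G) (p : G * G) : {fset quad G} :=
  [fset qv v p; quad_swap (qv v p)].
Definition Pp (G : groupType) (B : {fset G}) (v : G) (p : G * G) : bool :=
  (p.1 != p.2) && ((p.2^-1 * (p.1 * v))%g \in B).

Lemma deg_mem (G : groupType) (F : fieldType) (a b : {fsfun G -> F with 0%R}) v e :
  v \in supp b ->
  (e \in [fset e in Z_edges a b | v \in edge_ends e]) =
  (e \in [seq Ee v p | p <- [seq p <- [seq (x, y) | x <- supp a, y <- supp a] | Pp (supp b) v p]]).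
Proof.
move=> vB; rewrite !inE; apply/andP/mapP.
- case=> /imfsetP [[[[h h'] g] g'] qZ ->] /imfsetP [q' q'e ->].
  move: qZ; rewrite !inE /= => /and3P [/andP [/andP [/andP [hA h'A] gB] g'B] gg' /eqP hg].
  have eg' : g' = (h'^-1 * (h * g))%g by rewrite hg mulKg.
  have eg : g = (h^-1 * (h' * g'))%g by rewrite -hg mulKg.
  move: q'e; rewrite !inE => /orP [/eqP -> | /eqP ->] /=.
  + exists (h, h'); last by rewrite /Ee /qv /= -eg'.
    rewrite mem_filter /Pp /= -eg' g'B andbT; apply/andP; split.
    * by apply: contra gg' => /eqP hh; rewrite eg' hh mulKg.
    * by apply/allpairsP; exists (h, h').
  + exists (h', h).
    * rewrite mem_filter /Pp /= -eg gB andbT; apply/andP; split.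
      - by apply: contra gg' => /eqP hh; rewrite eg hh mulKg.
      - by apply/allpairsP; exists (h', h).
    * rewrite /Ee /qv /quad_swap /= -eg; apply/fsetP => z; rewrite !inE orbC //.
- case=> p; rewrite mem_filter => /andP [/andP [p12 pB] /allpairsP [[x y] [xA yA ep]]] ->.
  move: ep => /= ep; subst p.
  split.
  + apply/imfsetP; exists (qv v (x, y)) => //.
    rewrite !inE /qv /= xA yA vB /=.
    rewrite /Pp /= in p12 pB; rewrite pB /= mulVKg eqxx andbT.
    apply: contra p12 => /eqP hv; apply/eqP.
    have : (y * v = x * v)%g by rewrite {1}hv mulVKg.
    by move/mulIg => ->.
  + apply/imfsetP; exists (qv v (x, y)) => //; by rewrite !inE eqxx.
Qed.

Lemma Pp_neq (G : groupType) (B : {fset G}) v p : Pp B v p -> v != (p.2^-1 * (p.1 * v))%g.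
Proof.
case/andP=> p12 _; apply: contra p12 => /eqP hv; apply/eqP.
have : (p.2 * v = p.1 * v)%g by rewrite {1}hv mulVKg.
by move/mulIg => ->.
Qed.

Lemma deg_sum (G : groupType) (F : fieldType) (a b : {fsfun G -> F with 0%R}) v :
  v \in supp b ->
  Z_deg a b v = \sum_(h <- supp a) \sum_(h' <- supp a) (Pp (supp b) v (h, h') : nat).
Proof.
move=> vB; rewrite /Z_deg (@card_fset_seq _ _ [seq Ee v p | p <- [seq p <- [seq (x, y) | x <- supp a, y <- supp a] | Pp (supp b) v p]]).
- rewrite size_map size_filter -sum1_count big_mkcond /= big_allpairs.
  by apply: eq_bigr => h _; apply: eq_bigr => h' _; case: Pp.
- rewrite map_inj_in_uniq ?filter_uniq ?allpairs_uniq ?fset_uniq //.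
    by move=> [? ?] [? ?] _ _.
  move=> p1 p2; rewrite !mem_filter => /andP [P1 _] /andP [P2 _] eE.
  have : qv v p1 \in Ee v p2 by rewrite -eE !inE eqxx.
  rewrite !inE => /orP [/eqP e1 | /eqP e2].
  + by case: p1 p2 {P1 P2 eE} e1 => [x1 y1] [x2 y2] [-> ->].
  + have := Pp_neq P2; move: e2; rewrite /qv /quad_swap /= => -[_ _ <- _]; by rewrite eqxx.
- by move=> e; apply: deg_mem.
Qed.

Lemma deg_t (G : groupType) (F : fieldType) (a b : {fsfun G -> F with 0%R}) v :
  v \in supp b ->
  (Z_deg a b v + size (supp a) = \sum_(h <- supp a) tcnt (supp a) (supp b) (h * v)%g)%N.
Proof.
move=> vB; rewrite deg_sum // -sum1_size -big_split /=; apply: eq_big_seq => h hA.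
rewrite /tcnt [RHS](bigD1_seq h) ?fset_uniq //= (bigD1_seq h) ?fset_uniq //=.
rewrite mulKg vB {1}/Pp eqxx /= add0n addn1 /=; congr S.
apply: eq_bigr => h' hh'; rewrite /Pp /= eq_sym hh'.
by [].
Qed.

Theorem mainTheorem12 (G : groupType) (F : fieldType)
    (alpha beta : {fsfun G -> F with 0%R}) :
  torsion_free G ->
  zero_divisor alpha ->
  #|` supp alpha| = 4 ->
  #|` S_set alpha| = 12 ->
  beta != [fsfun] ->
  galg_mul_zero alpha beta ->
  Z_maxdeg alpha beta = 5 ->
  (6 %| #|` [fset v in supp beta | Z_deg alpha beta v == 5] |)%N.
Proof.
Local Open Scope nat_scope.
move=> _ _ hA4 _ _ z hmax.
set A := supp alpha in hA4 *; set B := supp beta.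
have sA : size A = 4 by [].
set t := tcnt A B.
set d := Z_deg alpha beta.
have dle5 : forall v, v \in B -> d v <= 5.
  by move=> v vB; rewrite -hmax; apply: (leq_bigmax_seq (P := xpredT)).
have tge2 : forall h v, h \in A -> v \in B -> 2 <= t (h * v)%g.
  move=> h v hA vB; have := t_neq1 (h * v)%g z; rewrite -/A -/B -/t.
  have : 1 <= t (h * v)%g.
    by rewrite /t /tcnt (bigD1_seq h) ?fset_uniq //= mulKg vB.
  lia.
have bnd : forall v, v \in B -> 4 <= d v /\ (forall h, h \in A -> t (h * v)%g <= 3).
  move=> v vB; have := deg_t alpha vB; rewrite -/A -/B -/t -/d sA.
  have -> : \sum_(h <- A) t (h * v)%g = \sum_(h <- A) (t (h * v)%g - 2) + 8.
    rewrite -[8]/(2 * 4) -sA -sum1_size big_distrr /= -big_split /=.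
    by apply: eq_big_seq => h hA; rewrite muln1 subnK // tge2.
  move=> e; have := dle5 v vB; split; first by lia.
  move=> h hA; have : t (h * v)%g - 2 <= \sum_(h <- A) (t (h * v)%g - 2).
    by rewrite (bigD1_seq h) ?fset_uniq //= leq_addr.
  lia.
have tX : forall x, x \in Xs A B -> (t x == 2) || (t x == 3).
  move=> x; rewrite mem_undup => /allpairsP [[h g] [/= hA gB ->]].
  have := tge2 h g hA gB; have := (bnd g gB).2 h hA; lia.
have E1 : \sum_(v <- B) (d v + 4) = \sum_(x <- Xs A B) t x * t x.
  rewrite -reindex exchange_big /=; apply: eq_big_seq => v vB.
  by rewrite -sA deg_t.
have E2 : 4 * size B = \sum_(x <- Xs A B) t x.
  under [RHS]eq_bigr => x _ do rewrite -[t x]muln1.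
  rewrite -(reindex A B (fun _ => 1)) -sA mulnC -sum1_size big_distrl /=.
  by rewrite [RHS]exchange_big; apply: eq_bigr => g _; rewrite sum1_size mul1n.
have E3 : \sum_(x <- Xs A B) t x * t x + 6 * size (Xs A B) = 5 * \sum_(x <- Xs A B) t x.
  rewrite -sum1_size !big_distrr /= -big_split /=; apply: eq_big_seq => x xX.
  by have := tX x xX; case/orP => /eqP ->.
have E4 : \sum_(v <- B) (d v + 4) = 8 * size B + count (fun v => d v == 5) B.
  rewrite -sum1_size big_distrr /= -sum1_count [\sum_(j <- B | _) 1]big_mkcond /= -big_split /=.
  apply: eq_big_seq => v vB; have [h4 _] := bnd v vB; have := dle5 v vB.
  by case: eqP => [-> | ]; lia.
have -> : #|` [fset v in B | d v == 5]| = count (fun v => d v == 5) B.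
  rewrite (@card_fset_seq _ _ [seq v <- B | d v == 5]) ?size_filter ?filter_uniq ?fset_uniq //.
  by move=> v; rewrite !inE mem_filter andbC.
apply/dvdnP; exists (2 * size B - size (Xs A B)); lia.
Qed.
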